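(* Consider the continuous-time Markov process on $\mathbb N_0=\{0,1,2,\dots\}$ with rates $q(0,1)=1$, and for $x\ge1$: $q(x,x+1)=\frac{2x+1}{4x}$, $q(x,x-1)=1-\frac{2x+1}{4x}$, all other rates $0$. Consider the $2$-leg spider walk with local configurations $L(x)=\{(x,x+1),(x,x+2)\}$, $x\in\mathbb N_0$, i.e. the process on $\{(x,x+1),(x,x+2):x\ge0\}$ in which a leg at $y$ jumps to $y\pm1$ at rate $q(y,y\pm1)$ provided the resulting configuration is again of this form (legs distinct, at distance at most $2$, inside $\mathbb N_0$). Then the Markov process is recurrent whereas the spider walk is transient.
   Context: A continuous-time Markov process is called recurrent/transient if its jump chain, with transition probabilities $p(x,y)=q(x,y)/\sum_{z\ne x}q(x,z)$ for $y\ne x$, is recurrent/transient. *)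

(* Defs.v *)
From Stdlib Require Export Reals List Arith Bool.
Export ListNotations.
Open Scope R_scope.

(* A continuous-time Markov process with finite range is given by, for each
   state x, the list of its possible jumps (y, q(x,y)) with y <> x, pairwise
   distinct targets y, all other rates being 0. *)

Definition total_rate {T : Type} (rates : T -> list (T * R)) (x : T) : R :=
  fold_right (fun e acc => snd e + acc) 0 (rates x).

Definition rate_to {T : Type} (eqb : T -> T -> bool)
  (rates : T -> list (T * R)) (x y : T) : R :=
  fold_right (fun e acc => (if eqb (fst e) y then snd e else 0) + acc) 0 (rates x).

Definition jump_prob {T : Type} (eqb : T -> T -> bool)
  (rates : T -> list (T * R)) (x y : T) : R :=
  rate_to eqb rates x y / total_rate rates x.

(* first_passage n x y = P_x(jump chain first hits y at time n), n >= 1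
   (time 0 is not counted, so for x = y this is the first-return probability). *)
Fixpoint first_passage {T : Type} (eqb : T -> T -> bool)
  (rates : T -> list (T * R)) (n : nat) (x y : T) : R :=
  match n with
  | O => 0
  | S m =>
    match m with
    | O => jump_prob eqb rates x y
    | S _ =>
      fold_right
        (fun z acc =>
           (if eqb z y then 0
            else jump_prob eqb rates x z * first_passage eqb rates m z y) + acc)
        0 (map fst (rates x))
    end
  end.

Definition recurrent_state {T : Type} (eqb : T -> T -> bool)
  (rates : T -> list (T * R)) (x : T) : Prop :=
  infinite_sum (fun n => first_passage eqb rates (S n) x x) 1.

Definition transient_state {T : Type} (eqb : T -> T -> bool)
  (rates : T -> list (T * R)) (x : T) : Prop :=
  exists l, l < 1 /\ infinite_sum (fun n => first_passage eqb rates (S n) x x) l.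

Definition ctmc_rates {T : Type} (q : T -> T -> R) (nb : T -> list T) (x : T)
  : list (T * R) := map (fun y => (y, q x y)) (nb x).

Definition bd_q (x y : nat) : R :=
  match x with
  | O => if Nat.eqb y 1 then 1 else 0
  | S _ =>
    if Nat.eqb y (x + 1) then (2 * INR x + 1) / (4 * INR x)
    else if Nat.eqb y (x - 1) then 1 - (2 * INR x + 1) / (4 * INR x)
    else 0
  end.

Definition bd_nb (x : nat) : list nat :=
  match x with
  | O => [1%nat]
  | S k => [S (S k); k]
  end.

(* a configuration (a,b) (legs at a < b) is admissible iff it is in some L(x) *)
Definition spider_conf_b (c : nat * nat) : bool :=
  let (a, b) := c in Nat.eqb b (S a) || Nat.eqb b (S (S a)).

Definition spider_cands (q : nat -> nat -> R) (c : nat * nat) : list ((nat * nat) * R) :=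
  let (a, b) := c in
  (match a with O => [] | S a' => [((a', b), q a a')] end)
  ++ [((S a, b), q a (S a))]
  ++ (match b with O => [] | S b' => [((a, b'), q b b')] end)
  ++ [((a, S b), q b (S b))].

Definition spider_rates (q : nat -> nat -> R) (c : nat * nat) : list ((nat * nat) * R) :=
  filter (fun e => spider_conf_b (fst e)) (spider_cands q c).

Definition pair_eqb (c d : nat * nat) : bool :=
  Nat.eqb (fst c) (fst d) && Nat.eqb (snd c) (snd d).

(* Main.v *)
Require Import Defs.
From Stdlib Require Import Reals Lra Lia Psatz FunctionalExtensionality.
Open Scope R_scope.

Definition gj (j : nat) (g : nat -> R) (k : nat) : R := if Nat.eqb k j then 1 else g k.

Definition bdstep (pu : nat -> R) (j : nat) (g : nat -> R) (i : nat) : R :=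
  match i with
  | O => gj j g 1
  | S k => pu i * gj j g (S i) + (1 - pu i) * gj j g k
  end.

Fixpoint sq (pu : nat -> R) (j N : nat) : nat -> R :=
  match N with
  | O => bdstep pu j (fun _ => 0)
  | S M => bdstep pu j (sq pu j M)
  end.

Lemma gj_mono j g h k : (forall k, g k <= h k) -> gj j g k <= gj j h k.
Proof. intros H; unfold gj; destruct (Nat.eqb k j); [lra|apply H]. Qed.

Lemma bdstep_mono pu j g h i : (forall k, 0 <= pu k <= 1) -> (forall k, g k <= h k) ->
  bdstep pu j g i <= bdstep pu j h i.
Proof.
  intros Hp H; destruct i as [|k]; simpl.
  - apply gj_mono; auto.
  - specialize (Hp (S k)).
    apply Rplus_le_compat; apply Rmult_le_compat_l; try lra; apply gj_mono; auto.
Qed.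

Lemma gj_range j g k : (forall k, 0 <= g k <= 1) -> 0 <= gj j g k <= 1.
Proof. intros H; unfold gj; destruct (Nat.eqb k j); [lra|apply H]. Qed.

Lemma bdstep_range pu j g i : (forall k, 0 <= pu k <= 1) -> (forall k, 0 <= g k <= 1) ->
  0 <= bdstep pu j g i <= 1.
Proof.
  intros Hp H; destruct i as [|k]; simpl.
  - apply gj_range; auto.
  - specialize (Hp (S k)).
    pose proof (gj_range j g (S (S k)) H). pose proof (gj_range j g k H). nra.
Qed.

Lemma sq_range pu j N i : (forall k, 0 <= pu k <= 1) -> 0 <= sq pu j N i <= 1.
Proof.
  intros Hp; revert i; induction N; intros i; simpl; apply bdstep_range; auto.
  intros; lra.
Qed.

Lemma sq_grow pu j N i : (forall k, 0 <= pu k <= 1) -> sq pu j N i <= sq pu j (S N) i.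
Proof.
  intros Hp; revert i; induction N; intros i.
  - simpl. apply bdstep_mono; auto. intros k; apply (sq_range pu j 0 k Hp).
  - change (bdstep pu j (sq pu j N) i <= bdstep pu j (sq pu j (S N)) i).
    apply bdstep_mono; auto.
Qed.

Lemma bdstep_ext pu j g h i : (forall k, k <> j -> g k = h k) -> bdstep pu j g i = bdstep pu j h i.
Proof.
  intros H. assert (E : forall k, gj j g k = gj j h k).
  { intros k; unfold gj; destruct (Nat.eqb k j) eqn:E; auto. apply H. apply Nat.eqb_neq; auto. }
  destruct i; simpl; rewrite ?E; reflexivity.
Qed.

Lemma cv_const c : Un_cv (fun _ => c) c.
Proof. intros e He; exists O; intros; unfold Rdist; rewrite Rminus_diag, Rabs_R0; lra. Qed.

Lemma cv_shift u l : Un_cv u l -> Un_cv (fun n => u (S n)) l.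
Proof. intros H e He; destruct (H e He) as [N HN]; exists N; intros n Hn; apply HN; lia. Qed.

Lemma cv_gj j f L k : (forall k, Un_cv (fun N => f N k) (L k)) ->
  Un_cv (fun N => gj j (f N) k) (gj j L k).
Proof. intros H; unfold gj; destruct (Nat.eqb k j); [apply cv_const|apply H]. Qed.

Lemma cv_bdstep pu j f L i : (forall k, Un_cv (fun N => f N k) (L k)) ->
  Un_cv (fun N => bdstep pu j (f N) i) (bdstep pu j L i).
Proof.
  intros H; destruct i as [|k]; simpl.
  - apply cv_gj; auto.
  - apply CV_plus; apply CV_mult; try apply cv_const; apply cv_gj; auto.
Qed.

Lemma lim_exists pu j : (forall k, 0 <= pu k <= 1) ->
  exists L : nat -> R, (forall i, Un_cv (fun N => sq pu j N i) (L i)) /\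
     (forall i, 0 <= L i <= 1) /\ (forall i, L i = bdstep pu j L i).
Proof.
  intros Hp.
  assert (Hg : forall i, Un_growing (fun N => sq pu j N i)).
  { intros i n; apply sq_grow; auto. }
  assert (Hb : forall i, has_ub (fun N => sq pu j N i)).
  { intros i; exists 1; intros x [n ->]; apply sq_range; auto. }
  exists (fun i => proj1_sig (growing_cv _ (Hg i) (Hb i))).
  set (L := fun i => proj1_sig (growing_cv _ (Hg i) (Hb i))).
  assert (HL : forall i, Un_cv (fun N => sq pu j N i) (L i)).
  { intros i; unfold L; destruct (growing_cv _ (Hg i) (Hb i)); simpl; auto. }
  split; [exact HL|split].
  - intros i; split.
    + apply (@Rle_cv_lim (fun _ => 0) (fun N => sq pu j N i)); auto.
      intros; apply sq_range; auto. apply cv_const.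
    + apply (@Rle_cv_lim (fun N => sq pu j N i) (fun _ => 1)); auto.
      intros; apply sq_range; auto. apply cv_const.
  - intros i. apply (UL_sequence (fun N => sq pu j (S N) i)).
    + apply (cv_shift (fun N => sq pu j N i)); auto.
    + apply cv_bdstep; auto.
Qed.

Fixpoint Hs (j n : nat) : R :=
  match n with O => 0 | S m => Hs j m + / (2 * INR (j + m) + 1) end.

Lemma ln_step x : 0 < x -> ln (x + 2) - ln x <= 2 / x.
Proof.
  intros Hx.
  assert (E : x + 2 = x * (1 + 2 / x)) by (field; lra).
  assert (Ht : 0 < 2 / x) by (apply Rdiv_lt_0_compat; lra).
  rewrite E, ln_mult; try lra.
  assert (ln (1 + 2/x) < 2/x).
  { rewrite <- (ln_exp (2/x)) at 2. apply ln_increasing; try lra.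
    apply exp_ineq1; lra. }
  lra.
Qed.

Lemma Hs_lb j n : ln (2 * INR (j + n) + 1) - ln (2 * INR j + 1) <= 2 * Hs j n.
Proof.
  induction n.
  - simpl. rewrite Nat.add_0_r. lra.
  - simpl Hs. rewrite Nat.add_succ_r, S_INR.
    pose proof (pos_INR (j + n)).
    pose proof (ln_step (2 * INR (j+n) + 1) ltac:(lra)).
    replace (2 * (INR (j + n) + 1) + 1) with (2 * INR (j+n) + 1 + 2) by ring.
    unfold Rdiv in H0. lra.
Qed.

Lemma Hs_div j M : exists n, Hs j n > M.
Proof.
  pose proof (pos_INR j).
  destruct (INR_unbounded (exp (2 * M + ln (2 * INR j + 1)))) as [n Hn].
  exists n.
  pose proof (Hs_lb j n).
  assert (ln (exp (2 * M + ln (2 * INR j + 1))) < ln (2 * INR (j + n) + 1)).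
  { pose proof (pos_INR n). apply ln_increasing; [apply exp_pos|]. rewrite plus_INR. lra. }
  rewrite ln_exp in H1. lra.
Qed.

Theorem rec_abs pu j :
  (forall k, 0 < pu k <= 1) ->
  (forall i, (1 <= i)%nat -> (1 - pu i) * (2 * INR i + 1) = pu i * (2 * INR i - 1)) ->
  Un_cv (fun N => sq pu j N j) 1.
Proof.
  intros Hp Hr.
  assert (Hp' : forall k, 0 <= pu k <= 1) by (intros k; specialize (Hp k); lra).
  destruct (lim_exists pu j Hp') as [L [HL [HR HE]]].
  set (G := gj j L).
  assert (HG01 : forall k, 0 <= G k <= 1) by (intros; apply gj_range; auto).
  assert (HGj : G j = 1) by (unfold G, gj; rewrite Nat.eqb_refl; auto).
  assert (HGoff : forall k, k <> j -> G k = L k).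
  { intros k Hk; unfold G, gj. apply Nat.eqb_neq in Hk; rewrite Hk; auto. }
  assert (HLs : forall k, L (S k) = pu (S k) * G (S (S k)) + (1 - pu (S k)) * G k).
  { intros k; rewrite HE at 1; reflexivity. }
  assert (Below : forall i, (S i <= j)%nat -> G (S i) = G i).
  { induction i; intros Hi.
    - rewrite (HGoff 0%nat) by lia. rewrite HE. reflexivity.
    - assert (Hb : G (S i) = L (S i)) by (apply HGoff; lia).
      rewrite HLs in Hb. pose proof (IHi ltac:(lia)) as Hi'.
      specialize (Hp (S i)).
      set (a := G (S (S i))) in *. set (b := G (S i)) in *. set (c := G i) in *.
      assert (pu (S i) * (a - b) = 0) by (rewrite Hi' in Hb |- *; lra).
      apply Rmult_integral in H; destruct H; lra. }
  assert (AllBelow : forall m, (m <= j)%nat -> G (j - m)%nat = 1).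
  { induction m; intros Hm.
    - rewrite Nat.sub_0_r; auto.
    - replace (j - m)%nat with (S (j - S m)) in IHm by lia.
      rewrite <- Below by lia. apply IHm; lia. }
  set (D := fun m => G (S (j + m)) - G (j + m)%nat).
  assert (HD : forall m, D (S m) * (2 * INR (j + S m) + 1) = D m * (2 * INR (j + m) + 1)).
  { intros m. unfold D. rewrite Nat.add_succ_r.
    assert (Hb : G (S (j + m)) = L (S (j + m))) by (apply HGoff; lia).
    rewrite HLs in Hb.
    pose proof (Hr (S (j + m)) ltac:(lia)) as Hq. rewrite S_INR in *.
    specialize (Hp (S (j+m))).
    set (p := pu (S (j + m))) in *. set (a := G (S (S (j + m)))) in *.
    set (b := G (S (j + m))) in *. set (c := G (j + m)%nat) in *.
    set (I := INR (j + m)) in *.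
    apply (Rmult_eq_reg_l p); [|lra].
    assert (E1 : p * (a - b) = (1 - p) * (b - c)) by lra.
    transitivity ((p * (a - b)) * (2 * (I + 1) + 1)); [ring|].
    rewrite E1.
    transitivity (((1 - p) * (2 * (I + 1) + 1)) * (b - c)); [ring|].
    rewrite Hq. ring. }
  set (K := D 0%nat * (2 * INR j + 1)).
  assert (HK : forall m, D m * (2 * INR (j + m) + 1) = K).
  { induction m. - unfold K; rewrite Nat.add_0_r; auto. - rewrite HD; auto. }
  assert (HGn : forall n, G (j + n)%nat = 1 + K * Hs j n).
  { induction n.
    - rewrite Nat.add_0_r; simpl; rewrite HGj; ring.
    - rewrite Nat.add_succ_r. simpl Hs.
      assert (G (S (j + n)) = G (j + n)%nat + D n) by (unfold D; ring).
      rewrite H, IHn. rewrite <- (HK n).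
      pose proof (pos_INR (j + n)).
      field. lra. }
  assert (HKle : K <= 0).
  { unfold K, D. rewrite Nat.add_0_r, HGj. pose proof (HG01 (S j)). pose proof (pos_INR j). nra. }
  assert (HK0 : K = 0).
  { destruct (Rle_lt_or_eq_dec _ _ HKle) as [Hlt|]; auto.
    destruct (Hs_div j (-1 / K)) as [n Hn].
    pose proof (HG01 (j + n)%nat). rewrite HGn in H.
    assert (K * (-1 / K) = -1) by (field; lra).
    assert (K * Hs j n < K * (-1/K)) by (apply Rmult_lt_gt_compat_neg_l; lra).
    lra. }
  assert (HGSj : G (S j) = 1).
  { assert (D 0%nat = 0).
    { unfold K in HK0. pose proof (pos_INR j).
      apply Rmult_integral in HK0; destruct HK0; auto; lra. }
    unfold D in H. rewrite Nat.add_0_r, HGj in H. lra. }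
  assert (HLj : L j = 1).
  { rewrite HE. destruct j as [|k].
    - simpl. exact HGSj.
    - simpl bdstep. fold G. rewrite HGSj.
      pose proof (AllBelow 1%nat ltac:(lia)). replace (S k - 1)%nat with k in H by lia.
      rewrite H. ring. }
  rewrite <- HLj. apply HL.
Qed.

Lemma Rdiv_le_0_compat a b : 0 <= a -> 0 < b -> 0 <= a / b.
Proof. intros; unfold Rdiv; apply Rmult_le_pos; [lra|left; apply Rinv_0_lt_compat; lra]. Qed.

Theorem tr_abs pu j :
  (forall k, 0 <= pu k <= 1) -> 0 < pu j ->
  (forall i, (1 <= i)%nat -> (1 - pu i) * (INR i + 3) <= pu i * (INR i + 1)) ->
  exists l, l < 1 /\ Un_cv (fun N => sq pu j N j) l.
Proof.
  intros Hp Hpj Hc.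
  set (Psi := fun i => if Nat.leb i j then 1 else (INR j + 2) / (INR i + 2)).
  assert (PsiR : forall i, 0 <= Psi i <= 1).
  { intros i; unfold Psi. destruct (Nat.leb i j) eqn:E; [lra|].
    apply Nat.leb_gt in E. apply lt_INR in E. pose proof (pos_INR j).
    split. apply Rdiv_le_0_compat; lra.
    apply (Rmult_le_reg_r (INR i + 2)); [lra|]. field_simplify; lra. }
  assert (Psij : Psi j = 1) by (unfold Psi; rewrite Nat.leb_refl; auto).
  assert (Psige : forall i, (j <= i)%nat -> Psi i = (INR j + 2) / (INR i + 2)).
  { intros i Hi; unfold Psi. destruct (Nat.leb i j) eqn:E; auto.
    apply Nat.leb_le in E. replace i with j by lia. pose proof (pos_INR j). field; lra. }
  assert (gjPsi : forall k, gj j Psi k = Psi k).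
  { intros k; unfold gj; destruct (Nat.eqb k j) eqn:E; auto.
    apply Nat.eqb_eq in E; subst; auto. }
  set (beta := bdstep pu j Psi j).
  set (Bd := fun i => if Nat.eqb i j then beta else Psi i).
  assert (betaR : 0 <= beta <= 1) by (apply bdstep_range; auto).
  assert (BdR : forall i, 0 <= Bd i) by (intros i; unfold Bd; destruct (Nat.eqb i j); [lra|apply PsiR]).
  assert (BdPsi : forall i, bdstep pu j Bd i = bdstep pu j Psi i).
  { intros i; apply bdstep_ext. intros k Hk; unfold Bd. apply Nat.eqb_neq in Hk; rewrite Hk; auto. }
  assert (Key : forall i, bdstep pu j Psi i <= Bd i).
  { intros i. destruct (lt_eq_lt_dec i j) as [[Hlt|Heq]|Hgt].
    - unfold Bd. assert (Nat.eqb i j = false) by (apply Nat.eqb_neq; lia). rewrite H.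
      unfold Psi at 2. assert (Nat.leb i j = true) by (apply Nat.leb_le; lia). rewrite H0.
      apply bdstep_range; auto.
    - subst i. unfold Bd. rewrite Nat.eqb_refl. apply Rle_refl.
    - destruct i as [|k]; [lia|].
      unfold Bd. assert (Nat.eqb (S k) j = false) by (apply Nat.eqb_neq; lia). rewrite H.
      simpl bdstep. rewrite !gjPsi. rewrite !Psige by lia. rewrite !S_INR.
      pose proof (Hc (S k) ltac:(lia)) as Hck. rewrite S_INR in Hck.
      specialize (Hp (S k)).
      pose proof (pos_INR k). pose proof (pos_INR j).
      set (p := pu (S k)) in *. set (I := INR k) in *. set (J := INR j) in *.
      assert (E : (J + 2) / (I + 1 + 2) - (p * ((J + 2) / (I + 1 + 1 + 2)) + (1 - p) * ((J + 2) / (I + 2)))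
                = (J + 2) * (2 * p * (I + 3) - (I + 4)) / ((I + 2) * (I + 3) * (I + 4))).
      { fold J. field. repeat split; lra. }
      assert (0 <= (J + 2) * (2 * p * (I + 3) - (I + 4)) / ((I + 2) * (I + 3) * (I + 4))).
      { apply Rdiv_le_0_compat. apply Rmult_le_pos; lra.
        apply Rmult_lt_0_compat; [apply Rmult_lt_0_compat|]; lra. }
      fold J. lra. }
  assert (Hb : forall N i, sq pu j N i <= Bd i).
  { induction N; intros i; simpl.
    - eapply Rle_trans; [|apply Key]. rewrite <- BdPsi. apply bdstep_mono; auto.
    - eapply Rle_trans; [|apply Key]. rewrite <- BdPsi. apply bdstep_mono; auto. }
  assert (betalt : beta < 1).
  { unfold beta. destruct j as [|k].
    - simpl. rewrite gjPsi. unfold Psi. simpl. lra.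
    - simpl bdstep. rewrite !gjPsi. rewrite Psige by lia.
      assert (Psi k = 1) by (unfold Psi; rewrite (proj2 (Nat.leb_le k (S k))) by lia; auto).
      rewrite H. rewrite !S_INR. pose proof (pos_INR k).
      assert ((INR k + 1 + 2) / (INR k + 1 + 1 + 2) < 1).
      { apply (Rmult_lt_reg_r (INR k + 1 + 1 + 2)); [lra|]. field_simplify; lra. }
      nra. }
  assert (Hg : Un_growing (fun N => sq pu j N j)) by (intros n; apply sq_grow; auto).
  assert (Hub : has_ub (fun N => sq pu j N j)).
  { exists 1; intros x [n ->]; apply sq_range; auto. }
  destruct (growing_cv _ Hg Hub) as [l Hl].
  exists l; split; auto.
  assert (l <= beta).
  { apply (@Rle_cv_lim (fun N => sq pu j N j) (fun _ => beta)); auto.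
    intros n. specialize (Hb n j). unfold Bd in Hb. rewrite Nat.eqb_refl in Hb. auto.
    apply cv_const. }
  lra.
Qed.

Definition Fz {T : Type} (eqb : T -> T -> bool) (rates : T -> list (T * R)) (y x : T) (g : T -> R) : R :=
  fold_right (fun z acc => (if eqb z y then 0 else jump_prob eqb rates x z * g z) + acc) 0
    (map fst (rates x)).

Definition Spart {T : Type} (eqb : T -> T -> bool) (rates : T -> list (T * R)) (y : T) (N : nat) (x : T) : R :=
  sum_f_R0 (fun n => first_passage eqb rates (S n) x y) N.

Lemma Fz_add {T : Type} eqb rates (y x : T) g1 g2 :
  Fz eqb rates y x (fun z => g1 z + g2 z) = Fz eqb rates y x g1 + Fz eqb rates y x g2.
Proof.
  unfold Fz. induction (map fst (rates x)); simpl; [ring|].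
  rewrite IHl. destruct (eqb a y); ring.
Qed.

Lemma Fz_zero {T : Type} eqb rates (y x : T) : Fz eqb rates y x (fun _ => 0) = 0.
Proof.
  unfold Fz. induction (map fst (rates x)); simpl; [ring|].
  rewrite IHl. destruct (eqb a y); ring.
Qed.

Lemma Spart_0 {T : Type} eqb rates (y x : T) : Spart eqb rates y 0 x = jump_prob eqb rates x y.
Proof. reflexivity. Qed.

Lemma Spart_S {T : Type} eqb rates (y : T) N x :
  Spart eqb rates y (S N) x = jump_prob eqb rates x y + Fz eqb rates y x (Spart eqb rates y N).
Proof.
  revert x; induction N; intros x.
  - reflexivity.
  - assert (E : Spart eqb rates y (S (S N)) x =
                Spart eqb rates y (S N) x + first_passage eqb rates (S (S (S N))) x y) by reflexivity.
    rewrite E, IHN.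
    assert (E2 : first_passage eqb rates (S (S (S N))) x y =
                 Fz eqb rates y x (fun z => first_passage eqb rates (S (S N)) z y)) by reflexivity.
    rewrite E2.
    assert (E3 : Fz eqb rates y x (Spart eqb rates y (S N)) =
                 Fz eqb rates y x (fun z => Spart eqb rates y N z + first_passage eqb rates (S (S N)) z y))
      by reflexivity.
    rewrite E3, Fz_add. ring.
Qed.

Lemma one_el {T : Type} eqb rates (x y z1 : T) r1 g :
  rates x = [(z1, r1)] -> eqb z1 z1 = true ->
  jump_prob eqb rates x y + Fz eqb rates y x g = r1 / r1 * (if eqb z1 y then 1 else g z1).
Proof.
  intros H H1. unfold Fz, jump_prob, rate_to, total_rate. rewrite H. simpl. rewrite H1.
  destruct (eqb z1 y); rewrite ?Rplus_0_r; unfold Rdiv; ring.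
Qed.

Lemma two_el {T : Type} eqb rates (x y z1 z2 : T) r1 r2 g :
  rates x = [(z1, r1); (z2, r2)] -> eqb z1 z1 = true -> eqb z2 z2 = true ->
  eqb z1 z2 = false -> eqb z2 z1 = false ->
  jump_prob eqb rates x y + Fz eqb rates y x g =
    r1 / (r1 + r2) * (if eqb z1 y then 1 else g z1) + r2 / (r1 + r2) * (if eqb z2 y then 1 else g z2).
Proof.
  intros H H1 H2 H3 H4. unfold Fz, jump_prob, rate_to, total_rate. rewrite H. simpl.
  rewrite H1, H2, H3, H4.
  destruct (eqb z1 y), (eqb z2 y); rewrite ?Rplus_0_r, ?Rplus_0_l; unfold Rdiv. all: ring.
Qed.

Definition bd_pu (i : nat) : R :=
  match i with O => 1 | _ => (2 * INR i + 1) / (4 * INR i) end.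

Lemma bq_up k : bd_q (S k) (S (S k)) = bd_pu (S k).
Proof.
  unfold bd_q. replace (S k + 1)%nat with (S (S k)) by lia. rewrite Nat.eqb_refl. reflexivity.
Qed.

Lemma bq_dn k : bd_q (S k) k = 1 - bd_pu (S k).
Proof.
  unfold bd_q. replace (Nat.eqb k (S k + 1)) with false by (symmetry; apply Nat.eqb_neq; lia).
  replace (S k - 1)%nat with k by lia. rewrite Nat.eqb_refl. reflexivity.
Qed.

Lemma bd_key (y x : nat) g :
  jump_prob Nat.eqb (ctmc_rates bd_q bd_nb) x y + Fz Nat.eqb (ctmc_rates bd_q bd_nb) y x g
  = bdstep bd_pu y g x.
Proof.
  destruct x as [|k].
  - rewrite (one_el _ _ _ _ 1%nat 1) by reflexivity.
    replace (1/1) with 1 by field. rewrite Rmult_1_l. reflexivity.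
  - rewrite (two_el _ _ _ _ (S (S k)) k (bd_pu (S k)) (1 - bd_pu (S k))).
    + replace (bd_pu (S k) + (1 - bd_pu (S k))) with 1 by ring.
      simpl bdstep. unfold gj. unfold Rdiv. rewrite Rinv_1, !Rmult_1_r. reflexivity.
    + change (ctmc_rates bd_q bd_nb (S k)) with [(S (S k), bd_q (S k) (S (S k))); (k, bd_q (S k) k)].
      rewrite bq_up, bq_dn. reflexivity.
    + apply Nat.eqb_refl.
    + apply Nat.eqb_refl.
    + apply Nat.eqb_neq; lia.
    + apply Nat.eqb_neq; lia.
Qed.

Lemma bd_link y N x : Spart Nat.eqb (ctmc_rates bd_q bd_nb) y N x = sq bd_pu y N x.
Proof.
  revert x; induction N; intros x.
  - rewrite Spart_0. rewrite <- (Rplus_0_r (jump_prob _ _ _ _)).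
    rewrite <- (Fz_zero Nat.eqb (ctmc_rates bd_q bd_nb) y x). apply bd_key.
  - rewrite Spart_S, bd_key. simpl. f_equal. apply functional_extensionality. auto.
Qed.

Fixpoint cf (i : nat) : nat * nat :=
  match i with
  | O => (0%nat, 1%nat)
  | S O => (0%nat, 2%nat)
  | S (S k) => (S (fst (cf k)), S (snd (cf k)))
  end.

Lemma cf_even a : cf (2 * a) = (a, S a).
Proof.
  induction a; [reflexivity|].
  replace (2 * S a)%nat with (S (S (2 * a))) by lia.
  change (cf (S (S (2 * a)))) with (S (fst (cf (2 * a))), S (snd (cf (2 * a)))). rewrite IHa. reflexivity.
Qed.

Lemma cf_odd a : cf (S (2 * a)) = (a, S (S a)).
Proof.
  induction a; [reflexivity|].
  replace (S (2 * S a))%nat with (S (S (S (2 * a)))) by lia.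
  change (cf (S (S (S (2 * a))))) with (S (fst (cf (S (2 * a)))), S (snd (cf (S (2 * a))))). rewrite IHa. reflexivity.
Qed.

Lemma cf_sum i : (fst (cf i) + snd (cf i))%nat = S i.
Proof.
  destruct (Nat.Even_or_Odd i) as [[a ->]|[a ->]].
  - rewrite cf_even. simpl. lia.
  - replace (2 * a + 1)%nat with (S (2 * a)) by lia. rewrite cf_odd. simpl. lia.
Qed.

Lemma pair_eqb_true c d : pair_eqb c d = true <-> c = d.
Proof.
  destruct c as [a b], d as [c d]; unfold pair_eqb; simpl.
  rewrite Bool.andb_true_iff, !Nat.eqb_eq. split; [intros [-> ->]; auto|intros H; inversion H; auto].
Qed.

Lemma peqb_cf k j : pair_eqb (cf k) (cf j) = Nat.eqb k j.
Proof.
  destruct (Nat.eqb k j) eqn:E.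
  - apply Nat.eqb_eq in E; subst. apply pair_eqb_true; auto.
  - destruct (pair_eqb (cf k) (cf j)) eqn:E2; auto.
    apply pair_eqb_true in E2. pose proof (cf_sum k). pose proof (cf_sum j).
    rewrite E2 in H. apply Nat.eqb_neq in E. lia.
Qed.

Lemma eqb_Sn n : Nat.eqb (S n) n = false.
Proof. apply Nat.eqb_neq; lia. Qed.
Lemma eqb_nS n : Nat.eqb n (S n) = false.
Proof. apply Nat.eqb_neq; lia. Qed.
Lemma eqb_nSS n : Nat.eqb n (S (S n)) = false.
Proof. apply Nat.eqb_neq; lia. Qed.
Lemma eqb_SSn n : Nat.eqb (S (S n)) n = false.
Proof. apply Nat.eqb_neq; lia. Qed.
Lemma eqb_SSSn n : Nat.eqb (S (S (S n))) n = false.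
Proof. apply Nat.eqb_neq; lia. Qed.
Lemma eqb_nSSS n : Nat.eqb n (S (S (S n))) = false.
Proof. apply Nat.eqb_neq; lia. Qed.

Lemma conf_ok1 a : spider_conf_b (a, S a) = true.
Proof. unfold spider_conf_b. rewrite Nat.eqb_refl. reflexivity. Qed.
Lemma conf_ok2 a : spider_conf_b (a, S (S a)) = true.
Proof. unfold spider_conf_b. rewrite Nat.eqb_refl, Bool.orb_true_r. reflexivity. Qed.
Lemma conf_bad0 a : spider_conf_b (a, a) = false.
Proof. unfold spider_conf_b. rewrite eqb_nS, eqb_nSS. reflexivity. Qed.
Lemma conf_bad3 a : spider_conf_b (a, S (S (S a))) = false.
Proof. unfold spider_conf_b. rewrite (proj2 (Nat.eqb_neq (S (S (S a))) (S a))) by lia. rewrite (proj2 (Nat.eqb_neq (S (S (S a))) (S (S a)))) by lia. reflexivity. Qed.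

Lemma SR0 q : spider_rates q (0%nat, 1%nat) = [((0%nat, 2%nat), q 1%nat 2%nat)].
Proof. reflexivity. Qed.

Lemma SRe q a : spider_rates q (S a, S (S a)) =
  [((a, S (S a)), q (S a) a); ((S a, S (S (S a))), q (S (S a)) (S (S (S a))))].
Proof.
  unfold spider_rates, spider_cands. cbn [app filter fst].
  rewrite conf_ok2, conf_bad0, conf_bad0, conf_ok2. reflexivity.
Qed.

Lemma SRo q a : spider_rates q (a, S (S a)) =
  [((S a, S (S a)), q a (S a)); ((a, S a), q (S (S a)) (S a))].
Proof.
  unfold spider_rates, spider_cands. destruct a as [|a]; cbn [app filter fst].
  - reflexivity.
  - rewrite conf_bad3, conf_ok1, conf_ok1, conf_bad3. reflexivity.
Qed.

Definition pu_c (c : nat * nat) : R :=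
  let (a, b) := c in
  if Nat.eqb b (S a) then bd_q b (S b) / (bd_q b (S b) + bd_q a (Nat.pred a))
  else bd_q a (S a) / (bd_q a (S a) + bd_q b (Nat.pred b)).

Definition spu (i : nat) : R := pu_c (cf i).

Lemma cfE a : cf (S (S (2 * a))) = (S a, S (S a)).
Proof. replace (S (S (2 * a))) with (2 * S a)%nat by lia. apply cf_even. Qed.
Lemma cfO3 a : cf (S (S (S (2 * a)))) = (S a, S (S (S a))).
Proof. replace (S (S (S (2 * a)))) with (S (2 * S a))%nat by lia. apply cf_odd. Qed.
Lemma cfE0 a : cf (2 * a) = (a, S a).
Proof. apply cf_even. Qed.

Lemma bd_pu_pos k : 0 < bd_pu (S k) <= 3/4.
Proof.
  unfold bd_pu. rewrite S_INR. pose proof (pos_INR k).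
  split. apply Rdiv_lt_0_compat; lra.
  apply (Rmult_le_reg_r (4 * (INR k + 1))); [lra|]. field_simplify; lra.
Qed.

Definition SRq := spider_rates bd_q.

Lemma peq_refl k : pair_eqb (cf k) (cf k) = true.
Proof. rewrite peqb_cf. apply Nat.eqb_refl. Qed.
Lemma peq_ne k l : k <> l -> pair_eqb (cf k) (cf l) = false.
Proof. intros; rewrite peqb_cf. apply Nat.eqb_neq; auto. Qed.

Lemma keyE j a g :
  jump_prob pair_eqb SRq (cf (S (S (2 * a)))) (cf j) + Fz pair_eqb SRq (cf j) (cf (S (S (2 * a)))) g
  = bdstep spu j (fun k => g (cf k)) (S (S (2 * a))).
Proof.
  rewrite (two_el pair_eqb SRq _ (cf j) (cf (S (2 * a))) (cf (S (S (S (2 * a)))))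
             (bd_q (S a) a) (bd_q (S (S a)) (S (S (S a))))).
  - rewrite !peqb_cf. unfold bdstep, gj, spu. rewrite cfE. cbn [pu_c Nat.pred].
    rewrite Nat.eqb_refl. rewrite bq_dn, bq_up.
    pose proof (bd_pu_pos a). pose proof (bd_pu_pos (S a)).
    destruct (Nat.eqb (S (2 * a)) j), (Nat.eqb (S (S (S (2 * a)))) j); field; lra.
  - unfold SRq. rewrite cfE, cf_odd, cfO3. apply SRe.
  - apply peq_refl.
  - apply peq_refl.
  - apply peq_ne; lia.
  - apply peq_ne; lia.
Qed.

Lemma keyO j a g :
  jump_prob pair_eqb SRq (cf (S (2 * a))) (cf j) + Fz pair_eqb SRq (cf j) (cf (S (2 * a))) g
  = bdstep spu j (fun k => g (cf k)) (S (2 * a)).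
Proof.
  rewrite (two_el pair_eqb SRq _ (cf j) (cf (S (S (2 * a)))) (cf (2 * a))
             (bd_q a (S a)) (bd_q (S (S a)) (S a))).
  - rewrite !peqb_cf. unfold bdstep, gj, spu. rewrite cf_odd. cbn [pu_c Nat.pred].
    rewrite eqb_Sn. rewrite (bq_dn (S a)).
    assert (0 < bd_q a (S a)).
    { destruct a. simpl. lra. rewrite bq_up. apply bd_pu_pos. }
    pose proof (bd_pu_pos (S a)).
    destruct (Nat.eqb (S (S (2 * a))) j), (Nat.eqb (2 * a) j); field; lra.
  - unfold SRq. rewrite cf_odd, cfE, cfE0. apply SRo.
  - apply peq_refl.
  - apply peq_refl.
  - apply peq_ne; lia.
  - apply peq_ne; lia.
Qed.

Lemma key0 j g :
  jump_prob pair_eqb SRq (cf 0) (cf j) + Fz pair_eqb SRq (cf j) (cf 0) g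
  = bdstep spu j (fun k => g (cf k)) 0.
Proof.
  rewrite (one_el pair_eqb SRq _ (cf j) (cf 1) (bd_q 1 2)).
  - rewrite peqb_cf. unfold bdstep, gj.
    rewrite (bq_up 0). pose proof (bd_pu_pos 0).
    replace (bd_pu 1 / bd_pu 1) with 1 by (field; lra). ring.
  - reflexivity.
  - apply peq_refl.
Qed.

Lemma sp_key j i g :
  jump_prob pair_eqb SRq (cf i) (cf j) + Fz pair_eqb SRq (cf j) (cf i) g
  = bdstep spu j (fun k => g (cf k)) i.
Proof.
  destruct (Nat.Even_or_Odd i) as [[a ->]|[a ->]].
  - destruct a as [|a]. apply key0.
    replace (2 * S a)%nat with (S (S (2 * a))) by lia. apply keyE.
  - replace (2 * a + 1)%nat with (S (2 * a)) by lia. apply keyO.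
Qed.

Lemma sp_link j N i : Spart pair_eqb SRq (cf j) N (cf i) = sq spu j N i.
Proof.
  revert i; induction N; intros i.
  - rewrite Spart_0. rewrite <- (Rplus_0_r (jump_prob _ _ _ _)).
    rewrite <- (Fz_zero pair_eqb SRq (cf j) (cf i)). rewrite sp_key. reflexivity.
  - rewrite Spart_S, sp_key. simpl. f_equal. apply functional_extensionality. auto.
Qed.

Lemma frac_cond ru rd I : 0 < ru -> 0 <= rd -> rd * (I + 3) <= ru * (I + 1) ->
  (1 - ru / (ru + rd)) * (I + 3) <= ru / (ru + rd) * (I + 1).
Proof.
  intros H1 H2 H3.
  replace (1 - ru / (ru + rd)) with (rd / (ru + rd)) by (field; lra).
  unfold Rdiv. replace (rd * / (ru + rd) * (I + 3)) with ((rd * (I + 3)) * / (ru + rd)) by ring.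
  replace (ru * / (ru + rd) * (I + 1)) with ((ru * (I + 1)) * / (ru + rd)) by ring.
  apply Rmult_le_compat_r; auto. left; apply Rinv_0_lt_compat; lra.
Qed.

Lemma frac_range ru rd : 0 < ru -> 0 <= rd -> 0 < ru / (ru + rd) <= 1.
Proof.
  intros; split. apply Rdiv_lt_0_compat; lra.
  apply (Rmult_le_reg_r (ru + rd)); [lra|]. field_simplify; lra.
Qed.

Lemma spu_form k : exists ru rd, spu k = ru / (ru + rd) /\ 0 < ru /\ 0 <= rd /\
  ((1 <= k)%nat -> rd * (INR k + 3) <= ru * (INR k + 1)).
Proof.
  destruct (Nat.Even_or_Odd k) as [[a ->]|[a ->]].
  - destruct a as [|a].
    + exists (bd_q 1 2), 0. split.
      * unfold spu. simpl cf. cbn [pu_c Nat.pred Nat.eqb]. reflexivity.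
      * split. rewrite (bq_up 0). apply bd_pu_pos. split. lra. intros; lia.
    + replace (2 * S a)%nat with (S (S (2 * a))) by lia.
      exists (bd_q (S (S a)) (S (S (S a)))), (bd_q (S a) a). split.
      * unfold spu. rewrite cfE. cbn [pu_c Nat.pred]. rewrite Nat.eqb_refl. reflexivity.
      * rewrite bq_up, bq_dn. pose proof (bd_pu_pos a). pose proof (bd_pu_pos (S a)).
        split; [lra|split;[lra|]]. intros _.
        unfold bd_pu. rewrite !S_INR, mult_INR. simpl (INR 2).
        pose proof (pos_INR a). set (A := INR a) in *.
        assert (E : (2 * (A + 1 + 1) + 1) / (4 * (A + 1 + 1)) * ((1 + 1) * A + 1 + 1 + 1)
                  - (1 - (2 * (A + 1) + 1) / (4 * (A + 1))) * ((1 + 1) * A + 1 + 1 + 3)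
                  = (2 * A + 5) / (4 * (A + 1) * (A + 2))) by (field; lra).
        assert (0 <= (2 * A + 5) / (4 * (A + 1) * (A + 2))).
        { apply Rdiv_le_0_compat. lra. apply Rmult_lt_0_compat; [apply Rmult_lt_0_compat|]; lra. }
        lra.
  - replace (2 * a + 1)%nat with (S (2 * a)) by lia.
    exists (bd_q a (S a)), (bd_q (S (S a)) (S a)). split.
    + unfold spu. rewrite cf_odd. cbn [pu_c Nat.pred]. rewrite eqb_Sn. reflexivity.
    + rewrite (bq_dn (S a)). pose proof (bd_pu_pos (S a)).
      destruct a as [|a].
      * change (bd_q 0 1) with 1. split; [lra|split;[lra|]]. intros _.
        unfold bd_pu. rewrite !S_INR. simpl INR.
        assert (E : 1 - (2 * (0 + 1 + 1) + 1) / (4 * (0 + 1 + 1)) = 3/8) by field.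
        rewrite E. lra.
      * rewrite bq_up. pose proof (bd_pu_pos a).
        split; [lra|split;[lra|]]. intros _.
        unfold bd_pu. rewrite !S_INR, mult_INR, !S_INR. simpl (INR 2). rewrite ?INR_0, ?INR_1.
        pose proof (pos_INR a). set (A := INR a) in *.
        assert (E : (2 * (A + 1) + 1) / (4 * (A + 1)) * ((1 + 1) * (A + 1) + 1 + 1)
                  - (1 - (2 * (A + 1 + 1 + 1) + 1) / (4 * (A + 1 + 1 + 1))) * ((1 + 1) * (A + 1) + 1 + 3)
                  = 1 / (2 * (A + 1))) by (field; lra).
        assert (0 <= 1 / (2 * (A + 1))) by (apply Rdiv_le_0_compat; lra).
        lra.
Qed.

Theorem mainTheorem7 :
  (forall x : nat, recurrent_state Nat.eqb (ctmc_rates bd_q bd_nb) x) /\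
  (forall x : nat,
     transient_state pair_eqb (spider_rates bd_q) (x, S x) /\
     transient_state pair_eqb (spider_rates bd_q) (x, S (S x))).
Proof.
  assert (Hsp : forall k, 0 < spu k <= 1).
  { intros k; destruct (spu_form k) as [ru [rd [-> [H1 [H2 _]]]]]. apply frac_range; auto. }
  assert (Hsc : forall i, (1 <= i)%nat -> (1 - spu i) * (INR i + 3) <= spu i * (INR i + 1)).
  { intros i Hi; destruct (spu_form i) as [ru [rd [-> [H1 [H2 H3]]]]]. apply frac_cond; auto. }
  assert (Tr : forall j, transient_state pair_eqb (spider_rates bd_q) (cf j)).
  { intros j. destruct (tr_abs spu j) as [l [Hl Hcv]].
    - intros k; specialize (Hsp k); lra.
    - apply Hsp.
    - exact Hsc.
    - exists l; split; auto. intros eps He. destruct (Hcv eps He) as [N HN].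
      exists N; intros n Hn. specialize (HN n Hn). rewrite <- sp_link in HN. exact HN. }
  split.
  - intros x. unfold recurrent_state.
    assert (Hp : forall k, 0 < bd_pu k <= 1).
    { intros [|k]. simpl; lra. pose proof (bd_pu_pos k); lra. }
    assert (Hr : forall i, (1 <= i)%nat -> (1 - bd_pu i) * (2 * INR i + 1) = bd_pu i * (2 * INR i - 1)).
    { intros [|i] Hi; [lia|]. unfold bd_pu. pose proof (pos_INR i). rewrite S_INR. field. lra. }
    pose proof (rec_abs bd_pu x Hp Hr) as H.
    intros eps He. destruct (H eps He) as [N HN].
    exists N; intros n Hn. specialize (HN n Hn). rewrite <- bd_link in HN. exact HN.
  - intros x. split.
    + rewrite <- cf_even. apply Tr.
    + rewrite <- cf_odd. apply Tr.
Qed.
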